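(* Let $f(x)\in\mathbb{Z}[x]$ be a $0,1$-polynomial with $f(0)=1$ such that $f(x)$ is divisible by the product of two non-reciprocal irreducible polynomials in $\mathbb{Z}[x]$ (not necessarily distinct). Then there is a $0,1$-polynomial $g(x)$ with the same number of (nonzero) terms as $f(x)$, with $g(x)\notin\{f(x),\tilde f(x)\}$, satisfying $$f(x)\tilde f(x) = g(x)\tilde g(x).$$
   Context: A $0,1$-polynomial is a polynomial each of whose coefficients is $0$ or $1$. For nonzero $f(x)\in\mathbb{R}[x]$, $\tilde f(x)=x^{\deg f}f(1/x)$; $f$ is reciprocal if $f=\pm\tilde f$, and non-reciprocal otherwise. *)

(* Defs.v *)
From mathcomp Require Import all_boot all_order all_algebra.
Set Implicit Arguments. Unset Strict Implicit. Unset Printing Implicit Defensive.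
Import GRing.Theory Num.Theory.
Local Open Scope ring_scope.

Definition zero_one (p : {poly int}) : bool :=
  all (fun c => (c == 0) || (c == 1)) p.

(* tilde p = x^(deg p) p(1/x): reverse the coefficient list (size p = deg p + 1). *)
Definition tilde (p : {poly int}) : {poly int} :=
  \poly_(i < size p) p`_(size p - 1 - i)%N.

Definition reciprocal (p : {poly int}) : Prop := p = tilde p \/ p = - tilde p.

Definition irreducible_Zx (p : {poly int}) : Prop :=
  p != 0 /\ ~~ (p \is a GRing.unit) /\
  forall a b : {poly int}, p = a * b -> a \is a GRing.unit \/ b \is a GRing.unit.

Definition nterms (p : {poly int}) : nat := count (fun c => c != 0) p.

(* Main.v *)
Require Import Defs.
From mathcomp Require Import all_boot all_order all_algebra.
From mathcomp Require Import zify ring.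
Import GRing.Theory Num.Theory.
Local Open Scope ring_scope.

Definition R (N : nat) (p : {poly int}) : {poly int} := \poly_(i < N) p`_(N - 1 - i).

Lemma coef_tilde (p : {poly int}) i : (tilde p)`_i = if (i < size p)%N then p`_(size p - 1 - i) else 0.
Proof. by rewrite /tilde coef_poly. Qed.

Lemma size_tilde (p : {poly int}) : p`_0 != 0 -> size (tilde p) = size p.
Proof.
move=> H; rewrite /tilde size_poly_eq //.
have [->|Hs] := posnP (size p); first by rewrite subnn.
by have -> : (size p - 1 - (size p).-1 = 0)%N by lia.
Qed.

Lemma tilde_coef0 (p : {poly int}) : p != 0 -> (tilde p)`_0 = lead_coef p.
Proof.
move=> Hp; rewrite coef_tilde size_poly_gt0 Hp subn0 /lead_coef.
by congr nth; lia.
Qed.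

Lemma tildeK (p : {poly int}) : p`_0 != 0 -> tilde (tilde p) = p.
Proof.
move=> H; apply/polyP=> i; rewrite coef_tilde size_tilde //.
case: ltnP => Hi.
  rewrite coef_tilde ifT; last by lia.
  by congr nth; lia.
by rewrite nth_default.
Qed.

Lemma R_add N : {morph R N : x y / x + y >-> x + y}.
Proof. by move=> x y; apply/polyP=> i; rewrite coefD !coef_poly coefD; case: ifP; rewrite ?addr0. Qed.

Lemma R_0 N : R N 0 = 0.
Proof. by apply/polyP=> i; rewrite coef_poly !coef0 if_same. Qed.

Lemma R_sum N (I : Type) (r : seq I) (P : pred I) (F : I -> {poly int}) :
  R N (\sum_(i <- r | P i) F i) = \sum_(i <- r | P i) R N (F i).
Proof. exact: (big_morph (R N) (R_add N) (R_0 N)). Qed.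

Lemma R_XnZ N k c : (k < N)%N -> R N (c *: 'X^k) = c *: 'X^(N - 1 - k).
Proof.
move=> Hk; apply/polyP=> i; rewrite coef_poly !coefZ !coefXn.
case: ltnP => Hi.
  by have -> : ((N - 1 - i)%N == k) = (i == (N - 1 - k)%N) by apply/eqP/eqP; lia.
have -> : (i == (N - 1 - k)%N) = false by apply/eqP; lia.
by rewrite mulr0.
Qed.

Lemma polyW N (a : {poly int}) : (size a <= N)%N -> a = \sum_(i < N) a`_i *: 'X^i.
Proof.
move=> H; rewrite -poly_def; apply/polyP=> i; rewrite coef_poly.
case: ltnP => // Hi; rewrite nth_default //; exact: leq_trans Hi.
Qed.

Lemma R_sumform N (p : {poly int}) : (size p <= N)%N -> R N p = \sum_(i < N) p`_i *: 'X^(N - 1 - i).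
Proof.
move=> H; rewrite {1}(@polyW _ _ H) R_sum; apply: eq_bigr => i _; rewrite R_XnZ //.
Qed.

Lemma XZmul (c d : int) i j : (c *: 'X^i) * (d *: 'X^j) = (c * d) *: ('X^(i + j) : {poly int}).
Proof. by rewrite -scalerAl -scalerAr scalerA exprD. Qed.

Lemma R_mul A B (a b : {poly int}) : (0 < A)%N -> (0 < B)%N -> (size a <= A)%N -> (size b <= B)%N ->
  R (A + B).-1 (a * b) = R A a * R B b.
Proof.
move=> HA HB Ha Hb.
rewrite (@R_sumform _ _ Ha) (@R_sumform _ _ Hb) {1}(@polyW _ _ Ha) {1}(@polyW _ _ Hb).
rewrite big_distrl R_sum /= big_distrl /=; apply: eq_bigr => i _.
rewrite big_distrr R_sum /= big_distrr /=; apply: eq_bigr => j _.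
rewrite !XZmul R_XnZ; last by have := ltn_ord i; have := ltn_ord j; lia.
congr (_ *: 'X^_); have := ltn_ord i; have := ltn_ord j; lia.
Qed.

Lemma tilde_mul (a b : {poly int}) : a != 0 -> b != 0 -> tilde (a * b) = tilde a * tilde b.
Proof.
move=> Ha Hb; rewrite /tilde -!/(R _ _) size_mul //.
apply: R_mul => //; by rewrite size_poly_gt0.
Qed.

Lemma tilde_horner1 (p : {poly int}) : (tilde p).[1] = p.[1].
Proof.
rewrite /tilde -/(R _ _) R_sumform // horner_sum horner_coef; apply: eq_bigr => i _.
by rewrite hornerZ hornerXn !expr1n.
Qed.

Lemma middle (p : {poly int}) : p != 0 -> (p * tilde p)`_(size p).-1 = \sum_(i < size p) p`_i ^+ 2.
Proof.
move=> Hp; have Hs : (0 < size p)%N by rewrite size_poly_gt0.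
rewrite coefM prednK //; apply: eq_bigr => i _.
rewrite coef_tilde ifT; last by have := ltn_ord i; lia.
rewrite expr2; congr (_ * nth _ _ _); have := ltn_ord i; lia.
Qed.

Lemma hsum (p : {poly int}) : p.[1] = \sum_(i < size p) p`_i.
Proof. by rewrite horner_coef; apply: eq_bigr => i _; rewrite expr1n mulr1. Qed.

Lemma cnt01 (s : seq int) : all (fun c => (c == 0) || (c == 1)) s ->
  (count (fun c => c != 0) s)%:Z = \sum_(i < size s) s`_i.
Proof.
elim: s => [|c s IH] /=; first by rewrite big_ord0.
move=> /andP[Hc Hs]; rewrite big_ord_recl /= PoszD IH //.
by case/orP: Hc => /eqP ->.
Qed.

Lemma good (f g : {poly int}) : zero_one f -> f != 0 -> size g = size f ->
  g.[1] = f.[1] -> g * tilde g = f * tilde f -> zero_one g /\ nterms g = nterms f.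
Proof.
move=> Zf f0 Hs H1 Hgt.
have g0 : g != 0 by rewrite -size_poly_gt0 Hs size_poly_gt0.
have Hf i : (i < size f)%N -> f`_i = 0 \/ f`_i = 1.
  by move=> Hi; move/(all_nthP 0): Zf => /(_ i Hi) /orP[] /eqP ->; [left|right].
have E : \sum_(i < size g) (g`_i ^+ 2 - g`_i) = 0.
  have e1 : \sum_(i < size g) g`_i ^+ 2 = \sum_(i < size f) f`_i ^+ 2.
    by rewrite -!middle // Hgt Hs.
  have e2 : \sum_(i < size f) f`_i ^+ 2 = \sum_(i < size f) f`_i.
    by apply: eq_bigr => i _; case: (Hf i (ltn_ord i)) => ->; rewrite ?expr0n ?expr1n.
  by rewrite sumrB e1 e2 -!hsum H1 subrr.
have nn : forall i : 'I_(size g), true -> 0 <= g`_i ^+ 2 - g`_i.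
  by move=> i _; rewrite expr2; nia.
have each := psumr_eq0P nn E.
have Zg : zero_one g.
  apply/(all_nthP 0) => i Hi; have := each (Ordinal Hi) isT; rewrite /=.
  move=> Hx; have : nth 0 g i * (nth 0 g i - 1) == 0 by rewrite mulrBr mulr1 -expr2 Hx.
  by rewrite mulf_eq0 subr_eq0.
split => //.
have : (nterms g)%:Z = (nterms f)%:Z by rewrite /nterms !cnt01 // -!hsum H1.
by case.
Qed.

Lemma size3 (a b c a' b' c' : {poly int}) : a != 0 -> b != 0 -> c != 0 ->
  a' != 0 -> b' != 0 -> c' != 0 ->
  size a = size a' -> size b = size b' -> size c = size c' ->
  size (a * b * c) = size (a' * b' * c').
Proof.
by move=> ? ? ? ? ? ? Ha Hb Hc; rewrite !size_mul ?mulf_neq0 // Ha Hb Hc.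
Qed.

Theorem lemma2 (f : {poly int}) :
  zero_one f -> f.[0] = 1 ->
  (exists p q h : {poly int},
      irreducible_Zx p /\ irreducible_Zx q /\
      ~ reciprocal p /\ ~ reciprocal q /\ f = p * q * h) ->
  exists g : {poly int},
    zero_one g /\ nterms g = nterms f /\ g <> f /\ g <> tilde f /\
    f * tilde f = g * tilde g.
Proof.
move=> Zf F0 [p [q [h [_ [_ [Np [Nq Ef]]]]]]].
have Hc : p`_0 * q`_0 * h`_0 = 1 by rewrite -!horner_coef0 -!hornerM -Ef.
have p0 : p`_0 != 0 by apply/eqP => E; move: Hc; rewrite E !mul0r.
have q0 : q`_0 != 0 by apply/eqP => E; move: Hc; rewrite E mulr0 mul0r.
have h0 : h`_0 != 0 by apply/eqP => E; move: Hc; rewrite E mulr0.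
have nz (a : {poly int}) : a`_0 != 0 -> a != 0.
  by move=> H; apply/eqP => E; move: H; rewrite E coef0 eqxx.
have tnz (a : {poly int}) : a`_0 != 0 -> tilde a != 0.
  by move=> H; rewrite -size_poly_gt0 size_tilde // size_poly_gt0 nz.
have pn := nz _ p0; have qn := nz _ q0; have hn := nz _ h0.
have tpn := tnz _ p0; have tqn := tnz _ q0; have thn := tnz _ h0.
have f0 : f != 0 by rewrite Ef !mulf_neq0.
have Tf : tilde f = tilde p * tilde q * tilde h by rewrite Ef !tilde_mul ?mulf_neq0.
set tp := tilde p in Tf tpn *; set tq := tilde q in Tf tqn *; set th := tilde h in Tf thn *.
have stp : size tp = size p by rewrite size_tilde.
have stq : size tq = size q by rewrite size_tilde.
have Kp : tilde tp = p by rewrite tildeK.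
have Kq : tilde tq = q by rewrite tildeK.
have Kh : tilde th = h by rewrite tildeK.
have ok (g : {poly int}) : size g = size f -> g.[1] = f.[1] -> g * tilde g = f * tilde f ->
   (zero_one g /\ nterms g = nterms f /\ f * tilde f = g * tilde g).
  move=> A B C; have [D1 D2] := @good f g Zf f0 A B C; by split; [|split].
have e1 : forall x, x.[1] = (tilde x).[1] by move=> x; rewrite tilde_horner1.
have [Z1 [N1 M1]] : (zero_one (tp * q * h) /\ nterms (tp * q * h) = nterms f /\ f * tilde f = (tp * q * h) * tilde (tp * q * h)).
  apply: ok.
  - by rewrite Ef; apply: size3.
  - by rewrite Ef !hornerM tilde_horner1.
  - by rewrite !tilde_mul ?mulf_neq0 // Kp Tf Ef -/th -/tq; ring.
have [Z2 [N2 M2]] : (zero_one (p * tq * h) /\ nterms (p * tq * h) = nterms f /\ f * tilde f = (p * tq * h) * tilde (p * tq * h)).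
  apply: ok.
  - by rewrite Ef; apply: size3.
  - by rewrite Ef !hornerM tilde_horner1.
  - by rewrite !tilde_mul ?mulf_neq0 // Kq Tf Ef -/th -/tp; ring.
have [Z3 [N3 M3]] : (zero_one (tp * tq * h) /\ nterms (tp * tq * h) = nterms f /\ f * tilde f = (tp * tq * h) * tilde (tp * tq * h)).
  apply: ok.
  - by rewrite Ef; apply: size3.
  - by rewrite Ef !hornerM !tilde_horner1.
  - by rewrite !tilde_mul ?mulf_neq0 // Kp Kq Tf Ef -/th; ring.
have n1 : tp * q * h <> f.
  rewrite Ef -!mulrA => /mulIf => /(_ (mulf_neq0 qn hn)) E.
  by apply: Np; left; rewrite -/tp E.
have n2 : p * tq * h <> f.
  rewrite Ef => /mulIf => /(_ hn) /mulfI => /(_ pn) E.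
  by apply: Nq; left; rewrite -/tq E.
case: (eqVneq (tp * q * h) (tilde f)) => [A|A]; last first.
  by exists (tp * q * h); do 4?split => //; apply/eqP.
case: (eqVneq (p * tq * h) (tilde f)) => [B|B]; last first.
  by exists (p * tq * h); do 4?split => //; apply/eqP.
have X : q * h = tq * th by apply: (mulfI tpn); rewrite !mulrA A Tf.
have Y : p * h = tp * th.
  by apply: (mulfI tqn); rewrite !mulrA [tq * p]mulrC [tq * tp]mulrC B Tf.
case: (eqVneq (tp * tq * h) (tilde f)) => [C|C].
  exfalso; apply: Nq; left.
  have E : q * h = tq * h by apply: (mulfI tpn); rewrite !mulrA A C.
  exact: (mulIf hn E).
case: (eqVneq (tp * tq * h) f) => [D|D]; last first.
  by exists (tp * tq * h); do 4?split => //; apply/eqP.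
exfalso.
have Z : tp * tq = p * q by move: D; rewrite Ef => /mulIf; apply.
have W : p * q * (h ^+ 2 - th ^+ 2) =
   (p * h - tp * th) * (q * h) + (tp * th) * (q * h - tq * th) + (tp * tq - p * q) * th ^+ 2.
  ring.
move: W; rewrite X Y Z !subrr !mul0r mulr0 !addr0 => /eqP.
rewrite mulf_eq0 (negbTE (mulf_neq0 pn qn)) /= subr_sqr mulf_eq0 subr_eq0 addr_eq0.
case/orP => /eqP E.
  by apply: Nq; left; move: X; rewrite E => X; exact: (mulIf thn X).
apply: Nq; right.
have X' : - q * th = tq * th by rewrite mulNr -mulrN -E.
by have Q := mulIf thn X'; rewrite -/tq -Q opprK.
Qed.
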